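(* Let $G$ be a group, $N$ a normal subgroup of $G$, $\phi:G\to G/N$ the canonical projection, and $L,R$ nonempty subsets of $G$. Then $2\mathrm{S}(G;L,R)$ is weakly connected if and only if $2\mathrm{S}(G/N;\phi(L),\phi(R))$ is weakly connected and any two elements of $N$ are weakly connected to each other in $2\mathrm{S}(G;L,R)$.
   Context: For nonempty subsets $L,R$ of a group $G$, the two-sided group digraph $2\mathrm{S}(G;L,R)$ has vertex set $G$ and a directed arc $(g,h)$ if and only if $h=l^{-1}gr$ for some $l\in L$, $r\in R$. Vertex $g$ is weakly connected to $h$ if there is a sequence $g=g_0,\dots,g_n=h$ with, for each $i$, $(g_{i-1},g_i)$ or $(g_i,g_{i-1})$ an arc (intermediate vertices arbitrary in $G$); a digraph is weakly connected if every pair of vertices is weakly connected. *)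

(* Defs.v *)
Set Implicit Arguments.
Unset Strict Implicit.

Record Group := {
  carrier :> Type;
  gmul : carrier -> carrier -> carrier;
  ginv : carrier -> carrier;
  gone : carrier;
  gmulA : forall x y z, gmul x (gmul y z) = gmul (gmul x y) z;
  gmul1l : forall x, gmul gone x = x;
  gmul1r : forall x, gmul x gone = x;
  gmulVl : forall x, gmul (ginv x) x = gone;
  gmulVr : forall x, gmul x (ginv x) = gone
}.

Arguments gmul {g} _ _.
Arguments ginv {g} _.
Arguments gone {g}.

Definition nonempty (G : Group) (S : G -> Prop) : Prop := exists x, S x.

Definition normal_subgroup (G : Group) (N : G -> Prop) : Prop :=
  N gone /\
  (forall x y, N x -> N y -> N (gmul x y)) /\
  (forall x, N x -> N (ginv x)) /\
  (forall g x, N x -> N (gmul (gmul (ginv g) x) g)).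

Definition group_hom (G H : Group) (f : G -> H) : Prop :=
  forall x y, f (gmul x y) = gmul (f x) (f y).

(* phi : G -> Q is (up to isomorphism) the canonical projection G -> G/N:
   a surjective homomorphism whose kernel is exactly N. *)
Definition is_quotient_map (G Q : Group) (N : G -> Prop) (phi : G -> Q) : Prop :=
  group_hom (G:=G) (H:=Q) phi /\ (forall q, exists g, phi g = q) /\
  (forall g, phi g = gone <-> N g).

Definition image (G H : Group) (f : G -> H) (S : G -> Prop) : H -> Prop :=
  fun h => exists x, S x /\ h = f x.

Definition twoS_arc (G : Group) (L R : G -> Prop) (g h : G) : Prop :=
  exists l r, L l /\ R r /\ h = gmul (gmul (ginv l) g) r.

Inductive weakly_conn (G : Group) (L R : G -> Prop) : G -> G -> Prop :=
| wc_refl : forall g, weakly_conn L R g g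
| wc_step : forall g g' h,
    (twoS_arc L R g g' \/ twoS_arc L R g' g) ->
    weakly_conn L R g' h -> weakly_conn L R g h.

Definition weakly_connected (G : Group) (L R : G -> Prop) : Prop :=
  forall g h : G, weakly_conn L R g h.

(* Main.v *)
Require Import Defs.

Section S.
Variable G : Group.

Lemma cancel_l (a b c : G) : gmul a b = gmul a c -> b = c.
Proof.
  intro H. rewrite <- (gmul1l b), <- (gmul1l c), <- (gmulVl a), <- !gmulA, H. reflexivity.
Qed.

Lemma wc_trans (L R : G -> Prop) a b c :
  weakly_conn L R a b -> weakly_conn L R b c -> weakly_conn L R a c.
Proof.
  induction 1; intros; [assumption|]. eapply wc_step; eauto.
Qed.

Lemma wc_sym (L R : G -> Prop) a b :
  weakly_conn L R a b -> weakly_conn L R b a.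
Proof.
  induction 1. apply wc_refl.
  eapply wc_trans; [eassumption|]. eapply wc_step; [|apply wc_refl].
  destruct H; [right|left]; assumption.
Qed.
End S.

Section H.
Variables G Q : Group.
Variable phi : G -> Q.
Hypothesis hom : group_hom phi.

Lemma phi_one : phi gone = gone.
Proof.
  apply (@cancel_l _ (phi gone)). rewrite <- hom, gmul1l, gmul1r. reflexivity.
Qed.

Lemma phi_inv x : phi (ginv x) = ginv (phi x).
Proof.
  apply (@cancel_l _ (phi x)). rewrite <- hom, !gmulVr. apply phi_one.
Qed.

Lemma map_arc (L R : G -> Prop) a b :
  twoS_arc L R a b -> twoS_arc (image phi L) (image phi R) (phi a) (phi b).
Proof.
  intros (l & r & Hl & Hr & ->). exists (phi l), (phi r).
  repeat split; try (eexists; split; eauto).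
  rewrite !hom, phi_inv. reflexivity.
Qed.

Lemma map_wc (L R : G -> Prop) a b :
  weakly_conn L R a b -> weakly_conn (image phi L) (image phi R) (phi a) (phi b).
Proof.
  induction 1. apply wc_refl.
  eapply wc_step; [|eassumption]. destruct H; [left|right]; apply map_arc; auto.
Qed.

Lemma lift_wc (L R : G -> Prop) q q' :
  weakly_conn (image phi L) (image phi R) q q' ->
  forall x, phi x = q -> exists x', phi x' = q' /\ weakly_conn L R x x'.
Proof.
  induction 1; intros x Hx.
  - exists x. split; [assumption|apply wc_refl].
  - destruct H as [(l & r & (l0 & Hl0 & ->) & (r0 & Hr0 & ->) & ->)
                  |(l & r & (l0 & Hl0 & ->) & (r0 & Hr0 & ->) & Ee)].
    + destruct (IHweakly_conn (gmul (gmul (ginv l0) x) r0)) as (x' & E1 & E2).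
      { rewrite !hom, phi_inv, Hx. reflexivity. }
      exists x'. split; [assumption|]. eapply wc_step; [|eassumption].
      left. exists l0, r0. auto.
    + destruct (IHweakly_conn (gmul (gmul l0 x) (ginv r0))) as (x' & E1 & E2).
      { subst. rewrite !hom, phi_inv, Hx, !gmulA, gmulVr, gmul1l,
          <- (gmulA _ (phi r0)), gmulVr, gmul1r. reflexivity. }
      exists x'. split; [assumption|]. eapply wc_step; [|eassumption].
      right. exists l0, r0. repeat split; auto.
      rewrite !gmulA, gmulVl, gmul1l, <- gmulA, gmulVl, gmul1r. reflexivity.
Qed.
End H.

Theorem mainTheorem19 (G Q : Group) (N : G -> Prop) (phi : G -> Q)
  (L R : G -> Prop) :
  normal_subgroup N -> is_quotient_map N phi ->
  nonempty L -> nonempty R ->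
  (weakly_connected L R <->
   (weakly_connected (image phi L) (image phi R) /\
    (forall x y : G, N x -> N y -> weakly_conn L R x y))).
Proof.
  intros _ (hom & surj & ker) _ _. split.
  - intros W. split.
    + intros q q'. destruct (surj q) as [a <-]. destruct (surj q') as [b <-].
      apply map_wc; auto.
    + intros; apply W.
  - intros [W HN] g h.
    destruct (@lift_wc _ _ phi hom L R _ _ (W (phi g) gone) g eq_refl) as (x & Ex & Hx).
    destruct (@lift_wc _ _ phi hom L R _ _ (W (phi h) gone) h eq_refl) as (y & Ey & Hy).
    apply ker in Ex. apply ker in Ey.
    eapply wc_trans; [eassumption|]. eapply wc_trans; [apply (HN x y); auto|].
    apply wc_sym; assumption.
Qed.
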